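(* Let $f\in\ell^2(V,w)$ be nonnegative and not identically zero with $\mathrm{vol}(\mathrm{supp}(f))\le\mathrm{vol}(V)/2$, and let $a>b\ge0$ and $I=(b,a]$. If $\phi(f)\,\mathrm{vol}_f(a)+\mathrm{vol}_f(I)>0$, then $$\mathcal E_f(I)\ge\frac{\phi(f)^2\,\mathrm{vol}_f(a)^2\,\mathrm{len}(I)^2}{\phi(f)\,\mathrm{vol}_f(a)+\mathrm{vol}_f(I)}.$$
   Context: $G=(V,E,w)$ finite undirected, positive edge weights, $w(v)=\sum_{u\sim v}w(u,v)\ge1$, $\mathrm{vol}(S)=\sum_{v\in S}w(v)$, $\mathrm{supp}(f)=\{v:f(v)\ne0\}$. Conductance $\phi(S)=w(E(S,\overline S))/\min\{\mathrm{vol}(S),\mathrm{vol}(\overline S)\}$ for $\emptyset\ne S\subsetneq V$; $V_f(t)=\{v:f(v)\ge t\}$; $\phi(f)=\min\{\phi(V_f(t)):\emptyset\ne V_f(t)\ne V\}$. For reals $t_1,t_2$, $[t_1,t_2]$ denotes the half-open interval $(\min\{t_1,t_2\},\max\{t_1,t_2\}]$, and $\mathrm{len}$ denotes length. $\mathrm{vol}_f(a)=\mathrm{vol}(\{v:f(v)\ge a\})$ and, for an interval $I$, $\mathrm{vol}_f(I)=\mathrm{vol}(\{v:f(v)\in I\})$. The energy of $f$ restricted to $I$ is $\mathcal E_f(I)=\sum_{\{u,v\}\in E}w(u,v)\,\mathrm{len}(I\cap[f(u),f(v)])^2$. *)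

(* Defs.v *)
(* Weighted graph on a finite vertex type V with real weights
   in an arbitrary real field R; w u v = weight of edge {u,v} (0 if no edge). *)
From HB Require Import structures.
From mathcomp Require Import all_boot all_order all_algebra.
Set Implicit Arguments. Unset Strict Implicit. Unset Printing Implicit Defensive.
Import Order.TTheory GRing.Theory Num.Theory.
Local Open Scope ring_scope.

Section GraphDefs.
Variables (R : realFieldType) (V : finType).

Definition wdeg (w : V -> V -> R) (v : V) : R := \sum_(u : V) w u v.

Definition vol (w : V -> V -> R) (S : {set V}) : R := \sum_(v in S) wdeg w v.

Definition supp (f : V -> R) : {set V} := [set v | f v != 0].

Definition cut (w : V -> V -> R) (S : {set V}) : R :=
  \sum_(u in S) \sum_(v in ~: S) w u v.

Definition conductance (w : V -> V -> R) (S : {set V}) : R :=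
  cut w S / Num.min (vol w S) (vol w (~: S)).

Definition level (f : V -> R) (t : R) : {set V} := [set v | t <= f v].

(* phi(f) = min over thresholds t with V_f(t) nonempty and proper.  Every such
   level set equals V_f(f v) for some vertex v (and V_f(f v) is always
   nonempty), so the minimum ranges over vertices v with V_f(f v) <> V.
   The neutral element 1 is harmless: conductances are always <= 1, and the
   index set is nonempty whenever f is non-constant. *)
Definition phi_f (w : V -> V -> R) (f : V -> R) : R :=
  \big[Num.min/1]_(v : V | level f (f v) != setT) conductance w (level f (f v)).

Definition vol_ge (w : V -> V -> R) (f : V -> R) (a : R) : R := vol w (level f a).

Definition vol_int (w : V -> V -> R) (f : V -> R) (b a : R) : R :=
  vol w [set v | (b < f v) && (f v <= a)].

Definition hlen (l r : R) : R := Num.max 0 (r - l).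

(* len( (b,a] ∩ [x,y] ) where [x,y] = (min x y, max x y] *)
Definition len_cap (b a x y : R) : R :=
  hlen (Num.max b (Num.min x y)) (Num.min a (Num.max x y)).

(* E_f((b,a]) = sum over edges {u,v} of w(u,v) len(I ∩ [f u, f v])^2.
   Each unordered edge appears twice in the ordered double sum (w symmetric,
   no loops), hence the factor 1/2. *)
Definition energy (w : V -> V -> R) (f : V -> R) (b a : R) : R :=
  2^-1 * \sum_(u : V) \sum_(v : V) w u v * (len_cap b a (f u) (f v)) ^+ 2.

End GraphDefs.

(* Main.v *)
Require Import Defs.
From HB Require Import structures.
From mathcomp Require Import all_boot all_order all_algebra.
From mathcomp Require Import ring lra.
Import Order.TTheory GRing.Theory Num.Theory.
Local Open Scope ring_scope.

Lemma abs_split (R : realFieldType) (x y s : R) :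
  `|x - y| = `|Num.min x s - Num.min y s| + `|Num.max x s - Num.max y s|.
Proof.
case: (leP x s) => h1; case: (leP y s) => h2.
- by rewrite subrr normr0 addr0.
- rewrite (ler0_norm (_ : x - y <= 0)); last lra.
  rewrite (ler0_norm (_ : x - s <= 0)); last lra.
  rewrite (ler0_norm (_ : s - y <= 0)); last lra. lra.
- rewrite (ger0_norm (_ : 0 <= x - y)); last lra.
  rewrite (ger0_norm (_ : 0 <= s - y)); last lra.
  rewrite (ger0_norm (_ : 0 <= x - s)); last lra. lra.
- by rewrite subrr normr0 add0r.
Qed.
Definition clamp {R : realFieldType} (b a x : R) := Num.min a (Num.max b x).

Lemma len_cap_aux (R : realFieldType) (b a x y : R) : b < a -> x <= y ->
  Num.max 0 (Num.min a y - Num.max b x) = `|clamp b a x - clamp b a y|.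
Proof.
move=> hba hxy; rewrite /clamp.
case: (leP b x) => h1.
  case: (leP b y) => h2; last lra.
  case: (leP a x) => h3.
    case: (leP a y) => h4; last lra.
    by rewrite ger0_norm; [case: leP => ?; lra | lra].
  case: (leP a y) => h4.
    rewrite distrC ger0_norm; last lra.
    case: leP => ?; lra.
  rewrite distrC ger0_norm; last lra.
  case: leP => ?; lra.
case: (leP a b) => h5; first lra.
case: (leP b y) => h2.
  case: (leP a y) => h4.
    rewrite distrC ger0_norm; last lra.
    case: leP => ?; lra.
  rewrite distrC ger0_norm; last lra.
  case: leP => ?; lra.
case: (leP a y) => h4; first lra.
by rewrite (min_r (ltW hba)) ger0_norm; [case: leP => ?; lra | lra].
Qed.

Lemma len_cap_abs (R : realFieldType) (b a x y : R) : b < a ->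
  len_cap b a x y = `|clamp b a x - clamp b a y|.
Proof.
move=> hba; rewrite /len_cap /hlen.
case: (leP x y) => h; first exact: len_cap_aux.
by rewrite distrC -len_cap_aux // ltW.
Qed.
Lemma split_pairs (R : realFieldType) (V : finType) (F : V -> V -> R) (L : {set V}) :
  (forall u v, 0 <= F u v) ->
  \sum_(u in L) \sum_(v in ~: L) F u v + \sum_(u in ~: L) \sum_(v in L) F u v
  <= \sum_u \sum_v F u v.
Proof.
move=> F0.
rewrite [X in _ <= X](bigID (fun u => u \in L)) /=.
apply: lerD.
  apply: ler_sum => u _.
  rewrite [X in _ <= X](bigID (fun v => v \in L)) /=.
  rewrite -[X in X <= _]add0r; apply: lerD; first exact: sumr_ge0.
  by rewrite le_eqVlt; apply/orP; left; apply/eqP; apply: eq_bigl => v; rewrite in_setC.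
rewrite [X in _ <= X](eq_bigl (fun u => u \in ~: L)); last by move=> u; rewrite in_setC.
apply: ler_sum => u _.
rewrite [X in _ <= X](bigID (fun v => v \in L)) /=.
rewrite -[X in X <= _]addr0; apply: lerD => //.
exact: sumr_ge0.
Qed.

Lemma coarea_base (R : realFieldType) (V : finType) (w : V -> V -> R)
  (w_sym : forall u v, w u v = w v u) (w_nneg : forall u v, 0 <= w u v)
  (g : V -> R) (b c K : R) :
  b < c -> (forall v, b <= g v /\ g v <= c) ->
  (forall v, ~~ ((b < g v) && (g v < c))) ->
  K <= cut w (level g c) ->
  2%:R * K * (c - b) <= \sum_u \sum_v w u v * `|g u - g v|.
Proof.
move=> hbc hg hint hK.
set L := level g c.
have gL v : v \in L -> g v = c.
  rewrite inE => h; have := hg v; lra.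
have gNL v : v \notin L -> g v = b.
  rewrite inE -ltNge => h; have := hg v; have := hint v; rewrite h andbT -leNgt; lra.
have H := @split_pairs R V (fun u v => w u v * `|g u - g v|) L
  (fun u v => mulr_ge0 (w_nneg u v) (normr_ge0 _)).
apply: le_trans H.
have E1 : \sum_(u in L) \sum_(v in ~: L) w u v * `|g u - g v| = (c - b) * cut w L.
  rewrite /cut mulr_sumr; apply: eq_bigr => u hu; rewrite mulr_sumr.
  apply: eq_bigr => v; rewrite in_setC => hv.
  rewrite (gL u hu) (gNL v hv) ger0_norm; [exact: mulrC | lra].
have E2 : \sum_(u in ~: L) \sum_(v in L) w u v * `|g u - g v| = (c - b) * cut w L.
  rewrite /cut exchange_big /= mulr_sumr; apply: eq_bigr => v hv; rewrite mulr_sumr.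
  apply: eq_bigr => u; rewrite in_setC => hu.
  rewrite w_sym (gL v hv) (gNL u hu) distrC ger0_norm; [exact: mulrC | lra].
rewrite E1 E2.
have h0 : 0 <= c - b by lra.
have h1 : K * (c - b) <= cut w L * (c - b) by apply: ler_wpM2r.
rewrite -mulrA (mulrC (c - b) (cut w L)).
lra.
Qed.

Lemma coarea (R : realFieldType) (V : finType) (w : V -> V -> R)
  (w_sym : forall u v, w u v = w v u) (w_nneg : forall u v, 0 <= w u v) :
  forall n (g : V -> R) (b c K : R),
  leq #|[set v | (b < g v) && (g v < c)]| n -> b < c ->
  (forall v, b <= g v /\ g v <= c) ->
  (forall t, b < t -> t <= c -> K <= cut w (level g t)) ->
  2%:R * K * (c - b) <= \sum_u \sum_v w u v * `|g u - g v|.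
Proof.
elim=> [|n IH] g b c K hn hbc hg hK.
  apply: coarea_base => //; last exact: hK (lexx c).
  move=> v; apply/negP => hv.
  move: hn; rewrite leqn0 cards_eq0 => /eqP A0.
  have : v \in [set v | (b < g v) && (g v < c)] by rewrite inE.
  by rewrite A0 inE.
case: (boolP [exists v, (b < g v) && (g v < c)]); last first.
  move=> hE; apply: coarea_base => //; last exact: hK (lexx c).
  move=> v; apply/negP => hv; apply: (negP hE); apply/existsP; exists v.
  exact: hv.
case/existsP => z /andP [hz1 hz2].
move: hn; rewrite (cardsD1 z) inE hz1 hz2 /= add1n ltnS => hn.
have -> : \sum_u \sum_v w u v * `|g u - g v| =
  \sum_u \sum_v w u v * `|Num.min (g u) (g z) - Num.min (g v) (g z)| +
  \sum_u \sum_v w u v * `|Num.max (g u) (g z) - Num.max (g v) (g z)|.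
  rewrite -big_split; apply: eq_bigr => u _; rewrite -big_split.
  apply: eq_bigr => v _; by rewrite (@abs_split R (g u) (g v) (g z)) mulrDr.
have -> : 2%:R * K * (c - b) = 2%:R * K * (g z - b) + 2%:R * K * (c - g z) by ring.
apply: lerD.
  apply: (IH (fun v => Num.min (g v) (g z)) b (g z) K) => //.
  - apply: leq_trans hn; apply: subset_leq_card; apply/subsetP => v.
    rewrite !inE => /andP [h1 h2].
    have hv : g v < g z by move: h2; rewrite gt_min ltxx orbF.
    move: h1; rewrite lt_min => /andP [h1 _].
    apply/andP; split; last by rewrite h1 (lt_trans hv hz2).
    by apply/eqP => e; rewrite e ltxx in hv.
  - move=> v; have := hg v; rewrite le_min ge_min lexx orbT (ltW hz1) andbT.
    by case=> -> _.
  - move=> t ht1 ht2.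
    have -> : level (fun v => Num.min (g v) (g z)) t = level g t.
      by apply/setP => v; rewrite !inE le_min ht2 andbT.
    exact: hK ht1 (le_trans ht2 (ltW hz2)).
apply: (IH (fun v => Num.max (g v) (g z)) (g z) c K) => //.
- apply: leq_trans hn; apply: subset_leq_card; apply/subsetP => v.
  rewrite !inE => /andP [h1 h2].
  have hv : g z < g v by move: h1; rewrite lt_max ltxx orbF.
  move: h2; rewrite gt_max => /andP [h2 _].
  apply/andP; split; last by rewrite h2 (lt_trans hz1 hv).
  by apply/eqP => e; rewrite e ltxx in hv.
- move=> v; have := hg v; rewrite le_max ge_max lexx orbT (ltW hz2) andbT.
  by case=> _ ->.
- move=> t ht1 ht2.
  have -> : level (fun v => Num.max (g v) (g z)) t = level g t.
    by apply/setP => v; rewrite !inE le_max (leNgt t (g z)) ht1 orbF.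
  exact: hK (lt_trans hz1 ht1) ht2.
Qed.
Lemma vol_ge0 (R : realFieldType) (V : finType) (w : V -> V -> R)
  (w_deg : forall v, 1 <= wdeg w v) (S : {set V}) : 0 <= vol w S.
Proof. by apply: sumr_ge0 => v _; apply: le_trans (w_deg v). Qed.

Arguments vol_ge0 {R V w}.

Lemma vol_sub (R : realFieldType) (V : finType) (w : V -> V -> R)
  (w_deg : forall v, 1 <= wdeg w v) (A B : {set V}) :
  A \subset B -> vol w A <= vol w B.
Proof.
move=> hAB; rewrite [vol w B](big_setID A) /= (setIidPr hAB) lerDl.
by apply: sumr_ge0 => v _; apply: le_trans (w_deg v).
Qed.
Arguments vol_sub {R V w} w_deg {A B}.

Lemma vol_compl (R : realFieldType) (V : finType) (w : V -> V -> R) (S : {set V}) :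
  vol w [set: V] = vol w S + vol w (~: S).
Proof. by rewrite /vol (big_setID S) /= setTI setTD. Qed.

Arguments vol_compl {R V}.

Lemma vol1 (R : realFieldType) (V : finType) (w : V -> V -> R) (z : V) :
  vol w [set z] = wdeg w z.
Proof. by rewrite /vol big_set1. Qed.

Arguments vol1 {R V}.

Lemma cut_ge0 (R : realFieldType) (V : finType) (w : V -> V -> R)
  (w_nneg : forall u v, 0 <= w u v) (S : {set V}) : 0 <= cut w S.
Proof. by apply: sumr_ge0 => u _; apply: sumr_ge0 => v _. Qed.

Arguments cut_ge0 {R V w}.

Lemma phi_ge0 (R : realFieldType) (V : finType) (w : V -> V -> R)
  (w_nneg : forall u v, 0 <= w u v) (w_deg : forall v, 1 <= wdeg w v)
  (f : V -> R) : 0 <= phi_f w f.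
Proof.
rewrite /phi_f; apply: (big_ind (fun x => 0 <= x)) => //.
  by move=> x y hx hy; rewrite le_min hx hy.
move=> v _; apply: divr_ge0; first exact: cut_ge0.
by rewrite le_min !vol_ge0.
Qed.
Arguments phi_ge0 {R V w}.

Lemma cut_bound (R : realFieldType) (V : finType) (w : V -> V -> R)
  (w_nneg : forall u v, 0 <= w u v) (w_deg : forall v, 1 <= wdeg w v)
  (f : V -> R) (f_supp : vol w (supp f) <= vol w [set: V] / 2%:R)
  (a b t : R) (hb : 0 <= b) (ht1 : b < t) (ht2 : t <= a) :
  phi_f w f * vol_ge w f a <= cut w (level f t).
Proof.
have P0 := phi_ge0 w_nneg w_deg f.
have [/eqP A0 | /set0Pn [z0 hz0]] := boolP (level f a == set0).
  by rewrite /vol_ge A0 /vol big_set0 mulr0 cut_ge0.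
set S := level f t.
have hzS : z0 \in S by move: hz0; rewrite !inE => h; apply: le_trans h.
have [m hmS hmin] := @arg_minP _ _ V z0 (fun v => v \in S) f hzS.
have hSm : level f (f m) = S.
  apply/setP => v; rewrite !inE; apply/idP/idP => hv.
    by move: hmS; rewrite inE => h; apply: le_trans hv.
  by apply: hmin; rewrite inE.
have hSsupp : S \subset supp f.
  apply/subsetP => v; rewrite !inE => hv; apply/negP => /eqP e.
  by move: hv; rewrite e => hv; lra.
have hz1 : 1 <= vol w [set z0] by rewrite vol1.
have hVpos : 0 < vol w [set: V].
  have := vol_sub w_deg (subsetT [set z0]); lra.
have hvolS : vol w S <= vol w [set: V] / 2%:R.
  exact: le_trans (vol_sub w_deg hSsupp) f_supp.
have hAS : vol_ge w f a <= vol w S.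
  apply: vol_sub => //; apply/subsetP => v; rewrite !inE => h; exact: le_trans h.
have hA1 : 1 <= vol_ge w f a.
  apply: le_trans hz1 _; apply: vol_sub => //; by rewrite sub1set.
have hSne : level f (f m) != setT.
  rewrite hSm; apply/eqP => e; move: hvolS; rewrite e; lra.
have hP : phi_f w f <= conductance w S.
  rewrite -hSm /phi_f.
  exact: (@bigmin_le_cond _ _ V 1 m (fun v => level f (f v) != setT) (fun v => conductance w (level f (f v))) hSne).
have hC := vol_compl w S.
move: hP; rewrite /conductance min_l; last lra.
rewrite ler_pdivlMr; last lra.
move=> h; apply: le_trans h; exact: ler_wpM2l.
Qed.
Arguments cut_bound {R V w}.

Lemma clamp_out (R : realFieldType) (b a x : R) : b < a ->
  ~~ ((b < x) && (x <= a)) -> clamp b a x = b \/ clamp b a x = a.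
Proof.
move=> hba; rewrite negb_and -leNgt -ltNge => /orP [h | h]; rewrite /clamp.
  by left; rewrite (max_l h) (min_r (ltW hba)).
by right; rewrite (max_r (ltW (lt_trans hba h))) (min_l (ltW h)).
Qed.

Arguments clamp_out {R b a x}.

Lemma pair_bound (R : realFieldType) (b a x y al s : R) : b < a ->
  0 <= al -> al <= a - b ->
  ((b < x) && (x <= a)) || ((b < y) && (y <= a)) -> 0 <= s -> 1 <= s ->
  al * len_cap b a x y - al ^+ 2 / 4%:R * s <= len_cap b a x y ^+ 2.
Proof.
move=> hba h0 h1 _ hs0 hs1.
set l := len_cap b a x y.
have : 0 <= (l - al / 2%:R) ^+ 2 by apply: sqr_ge0.
have : al ^+ 2 / 4%:R <= al ^+ 2 / 4%:R * s.
  rewrite -[X in X <= _]mulr1; apply: ler_wpM2l => //.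
  by apply: divr_ge0; [apply: sqr_ge0 | lra].
nra.
Qed.

Lemma pair_bound0 (R : realFieldType) (b a x y al : R) : b < a ->
  0 <= al -> al <= a - b ->
  ~~ ((b < x) && (x <= a)) -> ~~ ((b < y) && (y <= a)) ->
  al * len_cap b a x y <= len_cap b a x y ^+ 2.
Proof.
move=> hba h0 h1 hx hy.
rewrite (@len_cap_abs R b a x y hba).
case: (clamp_out hba hx) => ->; case: (clamp_out hba hy) => ->.
- rewrite ger0_norm; lra.
- rewrite ler0_norm; nra.
- rewrite ger0_norm; nra.
- rewrite ger0_norm; lra.
Qed.

Theorem mainTheorem6 (R : realFieldType) (V : finType) (w : V -> V -> R)
  (w_sym : forall u v, w u v = w v u)
  (w_nneg : forall u v, 0 <= w u v)
  (w_noloop : forall v, w v v = 0)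
  (w_deg : forall v, 1 <= wdeg w v)
  (f : V -> R)
  (f_nneg : forall v, 0 <= f v)
  (f_nz : exists v, f v != 0)
  (f_supp : vol w (supp f) <= vol w [set: V] / 2%:R)
  (a b : R) (hba : b < a) (hb : 0 <= b)
  (hpos : 0 < phi_f w f * vol_ge w f a + vol_int w f b a) :
  energy w f b a >=
    (phi_f w f) ^+ 2 * (vol_ge w f a) ^+ 2 * (a - b) ^+ 2
      / (phi_f w f * vol_ge w f a + vol_int w f b a).
Proof.
have P0 := phi_ge0 w_nneg w_deg f.
have A0 : 0 <= vol_ge w f a by apply: vol_ge0.
have D0 : 0 <= vol_int w f b a by apply: vol_ge0.
set P := phi_f w f in P0 hpos *.
set A := vol_ge w f a in A0 hpos *.
set D := vol_int w f b a in D0 hpos *.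
have K0 : 0 <= P * A by apply: mulr_ge0.
have HC : 2%:R * (P * A) * (a - b) <=
    \sum_u \sum_v w u v * len_cap b a (f u) (f v).
  have -> : \sum_u \sum_v w u v * len_cap b a (f u) (f v) =
      \sum_u \sum_v w u v * `|clamp b a (f u) - clamp b a (f v)|.
    by apply: eq_bigr => u _; apply: eq_bigr => v _; rewrite (@len_cap_abs R b a _ _ hba).
  apply: (@coarea R V w w_sym w_nneg #|V| (fun v => clamp b a (f v)) b a (P * A)).
  - exact: max_card.
  - exact: hba.
  - move=> v; rewrite /clamp le_min ge_min lexx (ltW hba) le_max lexx /=; by split.
  - move=> t ht1 ht2.
    have -> : level (fun v => clamp b a (f v)) t = level f t.
      apply/setP => v; rewrite !inE /clamp le_min ht2 /= le_max (leNgt t b) ht1 /=.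
      done.
    exact: (@cut_bound R V w w_nneg w_deg f f_supp a b t hb ht1 ht2).
set I := [set v | (b < f v) && (f v <= a)].
have hDI : D = vol w I by [].
have hden : 0 < 2%:R * (P * A) + D by lra.
set al := 2%:R * (P * A) * (a - b) / (2%:R * (P * A) + D).
have hal : al * (2%:R * (P * A) + D) = 2%:R * (P * A) * (a - b).
  by rewrite /al mulfVK //; apply: lt0r_neq0.
have al0 : 0 <= al.
  apply: divr_ge0; last lra.
  apply: mulr_ge0; first lra. lra.
have alL : al <= a - b.
  rewrite /al ler_pdivrMr //.
  have : 0 <= (a - b) * D by apply: mulr_ge0; lra.
  lra.
have Hpair u v : al * (w u v * len_cap b a (f u) (f v))
    - al ^+ 2 / 4%:R * (w u v * ((u \in I)%:R + (v \in I)%:R))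
    <= w u v * len_cap b a (f u) (f v) ^+ 2.
  have -> : al * (w u v * len_cap b a (f u) (f v))
    - al ^+ 2 / 4%:R * (w u v * ((u \in I)%:R + (v \in I)%:R)) =
    w u v * (al * len_cap b a (f u) (f v)
    - al ^+ 2 / 4%:R * ((u \in I)%:R + (v \in I)%:R)) by ring.
  apply: ler_wpM2l => //.
  case: (boolP (u \in I)) => hu; case: (boolP (v \in I)) => hv.
  - apply: pair_bound => //; first by move: hu; rewrite inE => ->.
    + by rewrite /= ?mulr1n ?mulr0n; lra.
    + by rewrite /= ?mulr1n ?mulr0n; lra.
  - apply: pair_bound => //; first by move: hu; rewrite inE => ->.
    + by rewrite /= ?mulr1n ?mulr0n; lra.
    + by rewrite /= ?mulr1n ?mulr0n; lra.
  - apply: pair_bound => //; first by move: hv; rewrite inE => ->; rewrite orbT.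
    + by rewrite /= ?mulr1n ?mulr0n; lra.
    + by rewrite /= ?mulr1n ?mulr0n; lra.
  - rewrite /= mulr0n addr0 mulr0 subr0.
    by apply: pair_bound0 => //; [move: hu | move: hv]; rewrite inE.
have Hhalf : \sum_u \sum_v w u v * (v \in I)%:R = D.
  rewrite exchange_big hDI /vol [RHS]big_mkcond /=; apply: eq_bigr => v _.
  rewrite -mulr_suml /wdeg; case: (v \in I); by rewrite /= ?mulr1n ?mulr0n ?mulr1 ?mulr0.
have Hhalf' : \sum_u \sum_v w u v * (u \in I)%:R = D.
  rewrite -Hhalf exchange_big; apply: eq_bigr => v _; apply: eq_bigr => u _.
  by rewrite w_sym.
have Hs : \sum_u \sum_v w u v * ((u \in I)%:R + (v \in I)%:R) = 2%:R * D.
  transitivity (\sum_u \sum_v w u v * (u \in I)%:R + \sum_u \sum_v w u v * (v \in I)%:R).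
    rewrite -big_split; apply: eq_bigr => u _; rewrite -big_split.
    by apply: eq_bigr => v _; rewrite mulrDr.
  by rewrite Hhalf' Hhalf; ring.
have HE : al * (2%:R * (P * A) * (a - b)) - al ^+ 2 / 4%:R * (2%:R * D) <=
    \sum_u \sum_v w u v * len_cap b a (f u) (f v) ^+ 2.
  have H1 : \sum_u \sum_v (al * (w u v * len_cap b a (f u) (f v))
    - al ^+ 2 / 4%:R * (w u v * ((u \in I)%:R + (v \in I)%:R)))
    <= \sum_u \sum_v w u v * len_cap b a (f u) (f v) ^+ 2.
    by apply: ler_sum => u _; apply: ler_sum => v _; exact: Hpair.
  apply: le_trans H1.
  rewrite [X in _ <= X](eq_bigr (fun u => al * \sum_v (w u v * len_cap b a (f u) (f v))
     - al ^+ 2 / 4%:R * \sum_v (w u v * ((u \in I)%:R + (v \in I)%:R)))); last first.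
    by move=> u _; rewrite sumrB !mulr_sumr.
  rewrite sumrB -!mulr_sumr Hs.
  have := ler_wpM2l al0 HC; lra.
rewrite /energy ler_pdivrMr //.
have hal' : al * (2%:R * (P * A) + D) = 2%:R * (P * A * (a - b)) by rewrite hal; ring.
have e1 := congr1 (fun x => P * A * (a - b) * x) hal'.
have e2 := congr1 (fun x => al * D * x) hal'.
simpl in e1, e2.
have h1 := ler_wpM2l (ltW hpos) HE.
have h2 : 0 <= al ^+ 2 * (P * A) * D by apply: mulr_ge0; [apply: mulr_ge0; [apply: sqr_ge0|]|].
lra.
Qed.
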